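(* Let $l,k\ge 2$ be integers, $q$ a prime number and $\mathbb{A}\subseteq\mathbb{Q}$. Then: (1) $\mathbb{A}\text{-}\mathcal{KS}(q^{2})\subseteq\mathbb{A}\text{-}\mathcal{KS}(q^{l})$; (2) if $(k-1)\mid(l-1)$, then $\mathbb{A}\text{-}\mathcal{KS}(q^{k})\subseteq\mathbb{A}\text{-}\mathcal{KS}(q^{l})$.
   Context: Every nonzero rational $\alpha$ is written $\alpha=\alpha_1/\alpha_2$ with $\alpha_1\in\mathbb{Z}$, $\alpha_2$ a positive integer and $\gcd(\alpha_1,\alpha_2)=1$. For an integer $N\ge 2$ and a nonzero rational $\alpha=\alpha_1/\alpha_2$, $N$ is called an $\alpha$-Korselt number if $N\neq\alpha$ and $\alpha_2p-\alpha_1$ divides $\alpha_2N-\alpha_1$ (in $\mathbb{Z}$) for every prime divisor $p$ of $N$. For $\mathbb{A}\subseteq\mathbb{Q}$, $\mathbb{A}\text{-}\mathcal{KS}(N)$ is the set of all $\beta\in\mathbb{A}\setminus\{0,N\}$ such that $N$ is a $\beta$-Korselt number. *)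

(* Defs.v *)
From mathcomp Require Import all_boot all_order all_algebra.
Set Implicit Arguments. Unset Strict Implicit. Unset Printing Implicit Defensive.
Import Order.TTheory GRing.Theory Num.Theory.
Local Open Scope ring_scope.

(* alpha = numq alpha / denq alpha, with denq > 0 and coprime: the normal form
   alpha_1 / alpha_2 of the paper. *)

Definition korselt (N : nat) (alpha : rat) : Prop :=
  (2 <= N)%N /\ alpha != 0 /\ alpha != (N%:R : rat) /\
  forall p : nat, prime p -> (p %| N)%N ->
    (denq alpha * (p%:Z) - numq alpha %| denq alpha * (N%:Z) - numq alpha)%Z.

Definition KS (A : rat -> Prop) (N : nat) (beta : rat) : Prop :=
  A beta /\ beta != 0 /\ beta != (N%:R : rat) /\ korselt N beta.

(* Main.v *)
Require Import Defs.
From mathcomp Require Import all_boot all_order all_algebra zify ring lra.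
Import Order.TTheory GRing.Theory Num.Theory.
Local Open Scope ring_scope.

Lemma divpow (a b : int) (q k l : nat) : (0 < k)%N -> (k.-1 %| l.-1)%N -> (0 < l)%N ->
  (a * q%:Z - b %| a * (q ^ k)%N%:Z - b)%Z -> (a * q%:Z - b %| a * (q ^ l)%N%:Z - b)%Z.
Proof.
move=> k0 dkl l0 H.
have E : forall n, (0 < n)%N -> (q ^ n)%N%:Z = q%:Z * (q%:Z ^+ n.-1).
  move=> n n0; rewrite -{1}(prednK n0) expnS PoszM; congr (_ * _).
  by rewrite -[LHS]natz natrX natz.
have H1 : (a * q%:Z - b %| a * q%:Z * (q%:Z ^+ k.-1 - 1))%Z.
  have -> : a * q%:Z * (q%:Z ^+ k.-1 - 1) = (a * (q ^ k)%N%:Z - b) - (a * q%:Z - b).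
    by rewrite E //; ring.
  by rewrite rpredB ?dvdzz.
have H2 : (q%:Z ^+ k.-1 - 1 %| q%:Z ^+ l.-1 - 1)%Z.
  case/dvdnP: dkl => t ->.
  by rewrite mulnC exprM subrX1 dvdz_mulr.
have -> : a * (q ^ l)%N%:Z - b = a * q%:Z * (q%:Z ^+ l.-1 - 1) + (a * q%:Z - b).
  by rewrite E //; ring.
rewrite rpredD ?dvdzz //; apply: dvdz_trans H1 _.
exact: dvdz_mul (dvdzz _) H2.
Qed.

Lemma main_gen (l k q : nat) (A : rat -> Prop) (beta : rat) :
  (2 <= l)%N -> (2 <= k)%N -> prime q -> (k.-1 %| l.-1)%N ->
  KS A (q ^ k) beta -> KS A (q ^ l) beta.
Proof.
move=> hl hk hq dkl [Ab [b0 [bk [_ [_ [_ Hp]]]]]].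
have q1 := prime_gt1 hq.
have Hq : (denq beta * q%:Z - numq beta %| denq beta * (q ^ k)%N%:Z - numq beta)%Z.
  by apply: Hp => //; rewrite dvdn_exp // ?dvdnn; lia.
have bl : beta != (q ^ l)%N%:R.
  have [<-|kl] := eqVneq k l; first by [].
  have kl' : (k < l)%N.
    have := dvdn_leq _ dkl; lia.
  apply/eqP => E; move: Hq; rewrite E.
  have -> : numq ((q ^ l)%N%:R : rat) = (q ^ l)%N%:Z by exact: (numq_int (Posz (q ^ l)%N)).
  have -> : denq ((q ^ l)%N%:R : rat) = 1 by exact: (denq_int (Posz (q ^ l)%N)).
  have h1 : (q < q ^ k)%N.
    by rewrite -{1}(expn1 q) ltn_exp2l //; lia.
  have h2 : (q ^ k < q ^ l)%N by rewrite ltn_exp2l.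
  move: h1 h2; set X := (q ^ l)%N; set Y := (q ^ k)%N => h1 h2.
  case/dvdzP => c; rewrite !mul1r => Hc.
  have [c0|c1] : (c <= 0 \/ 1 <= c)%R by lia.
  - nia.
  - nia.
split; first by [].
split; first by [].
split; first by [].
split.
  have : (q ^ 1 <= q ^ l)%N by rewrite leq_exp2l //; lia.
  rewrite expn1; lia.
split; first by [].
split; first by [].
move=> p hp; rewrite Euclid_dvdX // => /andP [pq _].
move: pq; rewrite dvdn_prime2 // => /eqP ->.
apply: divpow Hq; lia.
Qed.

Theorem proposition2p6 (l k q : nat) (A : rat -> Prop) :
  (2 <= l)%N -> (2 <= k)%N -> prime q ->
  (forall beta : rat, KS A (q ^ 2) beta -> KS A (q ^ l) beta) /\
  ((k.-1 %| l.-1)%N ->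
     forall beta : rat, KS A (q ^ k) beta -> KS A (q ^ l) beta).
Proof.
move=> hl hk hq; split.
  by move=> beta; apply: main_gen => //; rewrite dvd1n.
by move=> d beta; apply: main_gen.
Qed.
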